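(* Let $\mathcal U$ be an ultrafilter on a set $I$ and let $(M_i)_{i\in I}$ be a family of pointed metric spaces. Define $T\colon (\mathrm{Lip}_0(M_i))_{\mathcal U}\rightarrow \mathrm{Lip}_0((M_i)_{\mathcal U})$ by \[ T\big((f_i)_{\mathcal U}\big)\big((x_i)_{\mathcal U}\big)=\lim_{\mathcal U,i} f_i(x_i). \] Then $T$ is a well-defined linear operator with $\|T\|\leq 1$, and $T\big(B_{(\mathrm{Lip}_0(M_i))_{\mathcal U}}\big)$ is a $1$-norming set for $\mathcal F((M_i)_{\mathcal U})$ (where $\mathrm{Lip}_0((M_i)_{\mathcal U})$ is identified with $\mathcal F((M_i)_{\mathcal U})^*$).
   Context: Ultraproduct of metric spaces: given a set $I$, an ultrafilter $\mathcal U$ on $I$ and metric spaces $(M_i,d_i)$ with distinguished points $0_i\in M_i$, let $\ell_\infty(M_i)=\{(x_i)_{i\in I}\in\prod_i M_i:\sup_i d_i(x_i,0_i)<\infty\}$ with pseudometric $d((x_i),(y_i))=\lim_{\mathcal U,i}d_i(x_i,y_i)$. The ultraproduct $(M_i)_{\mathcal U}$ is the metric quotient of $\ell_\infty(M_i)$ identifying points at distance $0$; the class of $(x_i)_{i\in I}$ is written $(x_i)_{\mathcal U}$, and $(M_i)_{\mathcal U}$ is pointed by $(0_i)_{\mathcal U}$. For normed spaces the distinguished point is $0$, and this gives the usual Banach space ultraproduct with norm $\|(x_i)_{\mathcal U}\|=\lim_{\mathcal U}\|x_i\|$. For a pointed metric space $M$ (base point $0$), $\mathrm{Lip}_0(M)$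 is the Banach space of real-valued Lipschitz functions on $M$ vanishing at $0$, normed by the Lipschitz constant; $\delta(x)\in\mathrm{Lip}_0(M)^*$ is evaluation at $x$; the Lipschitz-free space is $\mathcal F(M)=\overline{\mathrm{span}}\{\delta(x):x\in M\}\subset \mathrm{Lip}_0(M)^*$, and $\mathcal F(M)^*=\mathrm{Lip}_0(M)$. A set $A\subset X^*$ is $\lambda$-norming for a Banach space $X$ if $\sup_{x^*\in A\cap B_{X^*}}|x^*(x)|\geq \frac1\lambda\|x\|$ for all $x\in X$. *)

(* Defs.v *)
From HB Require Import structures.
From mathcomp Require Import all_boot all_order all_algebra.
From mathcomp Require Import boolp classical_sets reals.
Set Implicit Arguments. Unset Strict Implicit. Unset Printing Implicit Defensive.
Import Order.TTheory GRing.Theory Num.Theory.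
Local Open Scope ring_scope.
Local Open Scope classical_set_scope.

Record pmet (R : realType) := PMet {
  pt :> Type;
  dist : pt -> pt -> R;
  base : pt;
  dist_eq0 : forall x y, dist x y = 0 <-> x = y;
  distC : forall x y, dist x y = dist y x;
  dist_tri : forall x y z, dist x z <= dist x y + dist y z }.

Definition is_ultrafilter (I : Type) (U : set (set I)) : Prop :=
  [/\ U setT, ~ U set0,
      (forall A B, U A -> U B -> U (A `&` B)),
      (forall A B, A `<=` B -> U A -> U B) &
      (forall A, U A \/ U (~` A))].

Definition is_ulim (R : realType) (I : Type) (U : set (set I)) (a : I -> R) (L : R) :=
  forall e : R, 0 < e -> U [set i | `|a i - L| < e].

(** The U-limit [lim_{U,i} a_i] (exists and is unique for bounded a). *)
Definition ulim (R : realType) (I : Type) (U : set (set I)) (a : I -> R) : R :=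
  xget 0 [set L | is_ulim U a L].

Definition lipschitz (R : realType) (X : Type) (d : X -> X -> R) (f : X -> R) :=
  exists L : R, forall x y, `|f x - f y| <= L * d x y.

Definition lipnorm (R : realType) (X : Type) (d : X -> X -> R) (f : X -> R) : R :=
  inf [set L : R | 0 <= L /\ forall x y, `|f x - f y| <= L * d x y].

Definition Lip0 (R : realType) (X : Type) (d : X -> X -> R) (x0 : X) (f : X -> R) :=
  lipschitz d f /\ f x0 = 0.

Definition lipball (R : realType) (X : Type) (d : X -> X -> R) (x0 : X) : set (X -> R) :=
  [set g | Lip0 d x0 g /\ lipnorm d g <= 1].

(** Elements of the Lipschitz-free space F(X) ⊂ Lip_0(X)^*: functionals on
    Lip_0(X) (given as maps (X -> R) -> R, only their values on Lip_0(X)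
    matter) which are linear on Lip_0(X) and belong to the norm-closure of
    span{δ(x) : x ∈ X} in Lip_0(X)^*. *)
Definition in_free (R : realType) (X : Type) (d : X -> X -> R) (x0 : X)
  (mu : (X -> R) -> R) : Prop :=
  (forall (a : R) g h, Lip0 d x0 g -> Lip0 d x0 h ->
     mu (fun x => a * g x + h x) = a * mu g + mu h) /\
  (forall e : R, 0 < e -> exists s : seq (R * X),
     forall g, lipball d x0 g -> `|mu g - \sum_(p <- s) p.1 * g p.2| <= e).

Definition dualnorm (R : realType) (X : Type) (d : X -> X -> R) (x0 : X)
  (mu : (X -> R) -> R) : R :=
  sup [set `|mu g| | g in lipball d x0].

(** Elements of ℓ_∞(M_i): bounded families (x_i). *)
Definition upt (R : realType) (I : Type) (M : I -> pmet R) : Type :=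
  {x : forall i, M i | exists C : R, forall i, dist (x i) (base (M i)) <= C}.

Lemma ubase_bounded (R : realType) (I : Type) (M : I -> pmet R) :
  exists C : R, forall i, dist (base (M i)) (base (M i)) <= C.
Proof. by exists 0 => i; rewrite (proj2 (dist_eq0 _ _) erefl). Qed.

Definition ubase (R : realType) (I : Type) (M : I -> pmet R) : upt M :=
  exist _ (fun i => base (M i)) (ubase_bounded M).

(** The ultraproduct (M_i)_U is the metric quotient of (upt M, udist U M);
    a Lipschitz function on (M_i)_U is the same as a Lipschitz function on
    this pseudometric space (they are constant on classes). *)
Definition udist (R : realType) (I : Type) (U : set (set I)) (M : I -> pmet R)
  (x y : upt M) : R :=
  ulim U (fun i => dist (sval x i) (sval y i)).

(** Representatives of elements of the ultraproduct (Lip_0(M_i))_U: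
    families (f_i) with f_i ∈ Lip_0(M_i) and sup_i ‖f_i‖ < ∞. *)
Definition lipfam (R : realType) (I : Type) (M : I -> pmet R)
  (f : forall i, M i -> R) : Prop :=
  (forall i, Lip0 (@dist R (M i)) (base (M i)) (f i)) /\
  exists C : R, forall i, lipnorm (@dist R (M i)) (f i) <= C.

Definition ufnorm (R : realType) (I : Type) (U : set (set I)) (M : I -> pmet R)
  (f : forall i, M i -> R) : R :=
  ulim U (fun i => lipnorm (@dist R (M i)) (f i)).

Definition Top (R : realType) (I : Type) (U : set (set I)) (M : I -> pmet R)
  (f : forall i, M i -> R) : upt M -> R :=
  fun x => ulim U (fun i => f i (sval x i)).

(* Main.v *)
Require Import Defs.
From HB Require Import structures.
From mathcomp Require Import all_boot all_order all_algebra.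
From mathcomp Require Import boolp classical_sets reals.
From mathcomp Require Import lra ring.
Set Implicit Arguments. Unset Strict Implicit. Unset Printing Implicit Defensive.
Import Order.TTheory GRing.Theory Num.Theory.
Local Open Scope ring_scope.
Local Open Scope classical_set_scope.

Lemma uf_nonempty (I : Type) (U : set (set I)) A :
  is_ultrafilter U -> U A -> exists i, A i.
Proof.
case=> _ U0 _ _ _ UA; apply: contrapT => nA; apply: U0.
have A0 : A = set0 by rewrite predeqE => i; split => // Ai; apply: nA; exists i.
by rewrite -A0.
Qed.

Lemma uf_and (I : Type) (U : set (set I)) (P Q : I -> Prop) :
  is_ultrafilter U -> U [set i | P i] -> U [set i | Q i] -> U [set i | P i /\ Q i].
Proof. by case=> _ _ UI _ _ HP HQ; exact: (UI _ _ HP HQ). Qed.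

Lemma uf_mono (I : Type) (U : set (set I)) (P Q : I -> Prop) :
  is_ultrafilter U -> (forall i, P i -> Q i) -> U [set i | P i] -> U [set i | Q i].
Proof. by case=> _ _ _ UM _ PQ; apply: UM => i /PQ. Qed.

Lemma uf_all (I : Type) (U : set (set I)) (P : I -> Prop) :
  is_ultrafilter U -> (forall i, P i) -> U [set i | P i].
Proof. by move=> HU HP; apply: (uf_mono HU (P := fun _ => True)) => //; case: HU => UT *; rewrite -[X in U X]/(@setT I). Qed.

Lemma ulim_uniq (R : realType) (I : Type) (U : set (set I)) a (L1 L2 : R) :
  is_ultrafilter U -> is_ulim U a L1 -> is_ulim U a L2 -> L1 = L2.
Proof.
move=> HU H1 H2; case: (eqVneq L1 L2) => // ne.
have e0 : 0 < `|L1 - L2| / 2 by rewrite divr_gt0 // normr_gt0 subr_eq0.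
have [i [h1 h2]] := uf_nonempty HU (uf_and HU (H1 _ e0) (H2 _ e0)).
have := ler_normB (a i - L2) (a i - L1).
have -> : a i - L2 - (a i - L1) = L1 - L2 by ring.
move: h1 h2; rewrite /= => h1 h2; lra.
Qed.

Lemma ulim_ex (R : realType) (I : Type) (U : set (set I)) (a : I -> R) C :
  is_ultrafilter U -> (forall i, `|a i| <= C) -> exists L, is_ulim U a L.
Proof.
move=> HU aC.
pose S := [set t : R | U [set i | t <= a i]].
have S0 : S (- C).
  apply: (uf_all HU) => i; have := aC i; rewrite ler_norml => /andP[]; lra.
have SC : ubound S C.
  move=> t St; rewrite leNgt; apply/negP => Ct.
  have [i /= ti] := uf_nonempty HU St; have := aC i; rewrite ler_norml => /andP[]; lra.
have hS : has_sup S by split; [exists (- C) | exists C].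
exists (sup S) => e e0.
have e20 : 0 < e / 2 by rewrite divr_gt0.
have [t St lt] := sup_adherent e0 hS.
have nS : ~ S (sup S + e / 2).
  move=> /(sup_upper_bound hS) => h; lra.
have Uc : U (~` [set i | sup S + e / 2 <= a i]).
  by case: HU => _ _ _ _ /(_ [set i | sup S + e / 2 <= a i]) [].
have := uf_and HU St (P := fun i => t <= a i) (Q := fun i => ~ (sup S + e / 2 <= a i)) Uc.
apply: (uf_mono HU) => i [h1 /negP]; rewrite -ltNge => h2.
rewrite ltr_norml; apply/andP; split; lra.
Qed.

Lemma ulimE (R : realType) (I : Type) (U : set (set I)) (a : I -> R) L :
  is_ultrafilter U -> is_ulim U a L -> ulim U a = L.
Proof.
move=> HU HL; apply: xget_unique => // y Hy; exact: ulim_uniq HU Hy HL.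
Qed.

Lemma ulimP (R : realType) (I : Type) (U : set (set I)) (a : I -> R) C :
  is_ultrafilter U -> (forall i, `|a i| <= C) -> is_ulim U a (ulim U a).
Proof. by move=> HU /(ulim_ex HU) [L HL]; rewrite (ulimE HU HL). Qed.

Lemma ulim_le (R : realType) (I : Type) (U : set (set I)) (a b : I -> R) L M :
  is_ultrafilter U -> is_ulim U a L -> is_ulim U b M -> (forall i, a i <= b i) -> L <= M.
Proof.
move=> HU HL HM ab; rewrite leNgt; apply/negP => ML.
have e0 : 0 < (L - M) / 2 by rewrite divr_gt0 // subr_gt0.
have [i [/= h1 h2]] := uf_nonempty HU (uf_and HU (HL _ e0) (HM _ e0)).
move: h1 h2; rewrite !ltr_norml => /andP[h1 h1'] /andP[h2 h2'].
have := ab i; lra.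
Qed.

Lemma ulim_cst (R : realType) (I : Type) (U : set (set I)) (c : R) :
  is_ultrafilter U -> is_ulim U (fun _ => c) c.
Proof. by move=> HU e e0; apply: uf_all => // i; rewrite subrr normr0. Qed.

Lemma ulim_ext (R : realType) (I : Type) (U : set (set I)) (a b : I -> R) L :
  is_ultrafilter U -> (forall i, a i = b i) -> is_ulim U a L -> is_ulim U b L.
Proof. by move=> HU ab HL e e0; apply: uf_mono (HL e e0) => // i; rewrite ab. Qed.

Lemma ulimD (R : realType) (I : Type) (U : set (set I)) (a b : I -> R) L M :
  is_ultrafilter U -> is_ulim U a L -> is_ulim U b M ->
  is_ulim U (fun i => a i + b i) (L + M).
Proof.
move=> HU HL HM e e0.
have e20 : 0 < e / 2 by rewrite divr_gt0.
apply: uf_mono (uf_and HU (HL _ e20) (HM _ e20)) => // i [h1 h2].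
have := ler_normD (a i - L) (b i - M).
have -> : a i - L + (b i - M) = a i + b i - (L + M) by ring.
move: h1 h2 => /= h1 h2; lra.
Qed.

Lemma ulimZ (R : realType) (I : Type) (U : set (set I)) (a : I -> R) L c :
  is_ultrafilter U -> is_ulim U a L -> is_ulim U (fun i => c * a i) (c * L).
Proof.
move=> HU HL e e0.
have e1 : 0 < e / (`|c| + 1) by rewrite divr_gt0 // ltr_pwDr.
apply: uf_mono (HL _ e1) => // i /= h.
rewrite -mulrBr normrM.
have c1 : 0 < `|c| + 1 by rewrite ltr_pwDr.
have : `|c| * `|a i - L| <= (`|c| + 1) * `|a i - L|.
  by rewrite ler_wpM2r // lerDl.
have : (`|c| + 1) * `|a i - L| < (`|c| + 1) * (e / (`|c| + 1)).
  by rewrite ltr_pM2l.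
have -> : (`|c| + 1) * (e / (`|c| + 1)) = e by rewrite mulrC divfK // gt_eqF.
lra.
Qed.

Lemma ulimB (R : realType) (I : Type) (U : set (set I)) (a b : I -> R) L M :
  is_ultrafilter U -> is_ulim U a L -> is_ulim U b M ->
  is_ulim U (fun i => a i - b i) (L - M).
Proof.
move=> HU HL HM; have := ulimD HU HL (ulimZ (-1) HU HM); rewrite mulN1r => H.
by apply: ulim_ext HU _ H => i; rewrite mulN1r.
Qed.

Lemma ulim0M (R : realType) (I : Type) (U : set (set I)) (a b : I -> R) :
  is_ultrafilter U -> is_ulim U a 0 -> is_ulim U b 0 ->
  is_ulim U (fun i => a i * b i) 0.
Proof.
move=> HU HL HM e e0.
apply: uf_mono (uf_and HU (HL _ ltr01) (HM _ e0)) => // i [/= h1 h2].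
move: h1 h2; rewrite !subr0 normrM => h1 h2.
have : `|a i| * `|b i| <= 1 * `|b i| by rewrite ler_wpM2r // ltW.
lra.
Qed.

Lemma ulimM (R : realType) (I : Type) (U : set (set I)) (a b : I -> R) L M :
  is_ultrafilter U -> is_ulim U a L -> is_ulim U b M ->
  is_ulim U (fun i => a i * b i) (L * M).
Proof.
move=> HU HL HM.
have HL0 := ulimB HU HL (ulim_cst L HU); rewrite subrr in HL0.
have HM0 := ulimB HU HM (ulim_cst M HU); rewrite subrr in HM0.
have H := ulimD HU (ulimD HU (ulimD HU (ulim0M HU HL0 HM0) (ulimZ L HU HM)) (ulimZ M HU HL))
   (ulim_cst (- (L * M)) HU).
have E : 0 + L * M + M * L + - (L * M) = L * M by ring.
rewrite E in H; apply: ulim_ext HU _ H => i; ring.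
Qed.

Lemma ulim_norm (R : realType) (I : Type) (U : set (set I)) (a : I -> R) L :
  is_ultrafilter U -> is_ulim U a L -> is_ulim U (fun i => `|a i|) `|L|.
Proof.
move=> HU HL e e0; apply: uf_mono (HL e e0) => // i /= h.
exact: le_lt_trans (ler_dist_dist _ _) h.
Qed.

Lemma min_lip (R : realType) (a b a' b' e : R) :
  `|a - a'| <= e -> `|b - b'| <= e -> `|Num.min a b - Num.min a' b'| <= e.
Proof.
rewrite !ler_norml => /andP[h1 h2] /andP[h3 h4].
rewrite /Num.min; case: ifP => h; case: ifP => h'; apply/andP; split;
  move: h h' => /= h h'; try lra.
all: try (move: h => /negbT; rewrite -leNgt => h; lra).
all: try (move: h' => /negbT; rewrite -leNgt => h'; lra).
Qed.

Lemma ulim_min (R : realType) (I : Type) (U : set (set I)) (a b : I -> R) L M :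
  is_ultrafilter U -> is_ulim U a L -> is_ulim U b M ->
  is_ulim U (fun i => Num.min (a i) (b i)) (Num.min L M).
Proof.
move=> HU HL HM e e0.
have e20 : 0 < e / 2 by rewrite divr_gt0.
apply: uf_mono (uf_and HU (HL _ e20) (HM _ e20)) => // i [/= h1 h2].
have := min_lip (ltW h1) (ltW h2); lra.
Qed.

Lemma dist_ge0 (R : realType) (M : pmet R) (x y : M) : 0 <= dist x y.
Proof.
have := dist_tri x y x; rewrite (proj2 (dist_eq0 x x) erefl) (distC y x); lra.
Qed.

Lemma dist_xx (R : realType) (M : pmet R) (x : M) : dist x x = 0.
Proof. exact: (proj2 (dist_eq0 x x) erefl). Qed.

Lemma dist_diff (R : realType) (M : pmet R) (y y' w : M) :
  `|dist y w - dist y' w| <= dist y y'.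
Proof.
have := dist_tri y y' w; have := dist_tri y' y w; rewrite (distC y' y) ler_norml.
move=> *; apply/andP; split; lra.
Qed.

Lemma lipset_ne (R : realType) (X : Type) (d : X -> X -> R) (f : X -> R) :
  (forall x y, 0 <= d x y) -> lipschitz d f ->
  [set L : R | 0 <= L /\ forall x y, `|f x - f y| <= L * d x y] !=set0.
Proof.
move=> d0 [L HL]; exists `|L|; split => // x y.
apply: le_trans (HL x y) _; rewrite ler_wpM2r //; exact: ler_norm.
Qed.

Lemma lipnorm_ge0 (R : realType) (X : Type) (d : X -> X -> R) (f : X -> R) :
  (forall x y, 0 <= d x y) -> lipschitz d f -> 0 <= lipnorm d f.
Proof. by move=> d0 lf; apply: lb_le_inf (lipset_ne d0 lf) _ => L []. Qed.

Lemma lipnorm_le (R : realType) (X : Type) (d : X -> X -> R) (f : X -> R) L :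
  0 <= L -> (forall x y, `|f x - f y| <= L * d x y) -> lipnorm d f <= L.
Proof.
move=> L0 HL; apply: (ge_inf (E := [set L : R | 0 <= L /\ forall x y, `|f x - f y| <= L * d x y])).
  by exists 0 => z [].
by split.
Qed.

Lemma lip_bound (R : realType) (X : Type) (d : X -> X -> R) (f : X -> R) :
  (forall x y, 0 <= d x y) -> lipschitz d f ->
  forall x y, `|f x - f y| <= lipnorm d f * d x y.
Proof.
move=> d0 lf x y.
have [L [L0 HL]] := lipset_ne d0 lf.
have := d0 x y; rewrite le_eqVlt => /orP[/eqP dz|dp].
  by have := HL x y; rewrite -dz !mulr0.
rewrite -ler_pdivrMr //; apply: lb_le_inf (lipset_ne d0 lf) _ => K [K0 HK].
by rewrite ler_pdivrMr.
Qed.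

Lemma upt_bound (R : realType) (I : Type) (M : I -> pmet R) (x : upt M) :
  exists C, forall i, dist (sval x i) (base (M i)) <= C.
Proof. exact: (svalP x). Qed.

Lemma udist_lim (R : realType) (I : Type) (U : set (set I)) (M : I -> pmet R) (x y : upt M) :
  is_ultrafilter U -> is_ulim U (fun i => dist (sval x i) (sval y i)) (udist U x y).
Proof.
move=> HU; have [Cx Hx] := upt_bound x; have [Cy Hy] := upt_bound y.
apply: (ulimP (C := Cx + Cy) HU) => i; rewrite ger0_norm ?dist_ge0 //.
have := dist_tri (sval x i) (base (M i)) (sval y i); rewrite (distC (base (M i)) (sval y i)).
have := Hx i; have := Hy i; move=> *; lra.
Qed.

Lemma udist_ge0 (R : realType) (I : Type) (U : set (set I)) (M : I -> pmet R) (x y : upt M) :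
  is_ultrafilter U -> 0 <= udist U x y.
Proof.
move=> HU; apply: ulim_le HU (ulim_cst 0 HU) (udist_lim x y HU) _ => i; exact: dist_ge0.
Qed.

Lemma udist_xx (R : realType) (I : Type) (U : set (set I)) (M : I -> pmet R) (x : upt M) :
  is_ultrafilter U -> udist U x x = 0.
Proof.
move=> HU; apply: ulimE => //; apply: ulim_ext HU _ (ulim_cst 0 HU) => i.
by rewrite dist_xx.
Qed.

Lemma fam_bound (R : realType) (I : Type) (M : I -> pmet R) (f : forall i, M i -> R) i x y :
  lipfam f -> `|f i x - f i y| <= lipnorm (@dist R (M i)) (f i) * dist x y.
Proof. by case=> /(_ i) [lf _] _; apply: (lip_bound (@dist_ge0 R (M i)) lf). Qed.

Lemma fam_ge0 (R : realType) (I : Type) (M : I -> pmet R) (f : forall i, M i -> R) i :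
  lipfam f -> 0 <= lipnorm (@dist R (M i)) (f i).
Proof. by case=> /(_ i) [lf _] _; apply: (lipnorm_ge0 (@dist_ge0 R (M i)) lf). Qed.

Lemma ufnorm_lim (R : realType) (I : Type) (U : set (set I)) (M : I -> pmet R) (f : forall i, M i -> R) :
  is_ultrafilter U -> lipfam f -> is_ulim U (fun i => lipnorm (@dist R (M i)) (f i)) (ufnorm U f).
Proof.
move=> HU hf; have [_ [C HC]] := hf; apply: (ulimP (C := C) HU) => i.
by rewrite ger0_norm ?HC // (@fam_ge0 _ _ _ _ i hf).
Qed.

Lemma Top_lim (R : realType) (I : Type) (U : set (set I)) (M : I -> pmet R) (f : forall i, M i -> R) (x : upt M) :
  is_ultrafilter U -> lipfam f -> is_ulim U (fun i => f i (sval x i)) (Top U f x).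
Proof.
move=> HU hf; have [Cx Hx] := upt_bound x; have [f0 [C HC]] := hf.
apply: (ulimP (C := C * Cx) HU) => i.
have := fam_bound (sval x i) (base (M i)) hf; rewrite (proj2 (f0 i)) subr0 => h.
apply: le_trans h _; apply: ler_pM => //; [exact: fam_ge0 | exact: dist_ge0].
Qed.

Lemma Top_lip (R : realType) (I : Type) (U : set (set I)) (M : I -> pmet R) (f : forall i, M i -> R) (x y : upt M) :
  is_ultrafilter U -> lipfam f -> `|Top U f x - Top U f y| <= ufnorm U f * udist U x y.
Proof.
move=> HU hf.
apply: ulim_le HU (ulim_norm HU (ulimB HU (Top_lim x HU hf) (Top_lim y HU hf)))
  (ulimM HU (ufnorm_lim HU hf) (udist_lim x y HU)) _ => i.
exact: fam_bound.
Qed.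

Lemma Top_base (R : realType) (I : Type) (U : set (set I)) (M : I -> pmet R) (f : forall i, M i -> R) :
  is_ultrafilter U -> lipfam f -> Top U f (ubase M) = 0.
Proof.
move=> HU [f0 _]; apply: ulimE => //; apply: ulim_ext HU _ (ulim_cst 0 HU) => i /=.
by rewrite (proj2 (f0 i)).
Qed.

Lemma ufnorm_ge0 (R : realType) (I : Type) (U : set (set I)) (M : I -> pmet R) (f : forall i, M i -> R) :
  is_ultrafilter U -> lipfam f -> 0 <= ufnorm U f.
Proof.
move=> HU hf; apply: ulim_le HU (ulim_cst 0 HU) (ufnorm_lim HU hf) _ => i.
exact: (@fam_ge0 _ _ _ _ i hf).
Qed.

Lemma lipfamB (R : realType) (I : Type) (M : I -> pmet R) (f g : forall i, M i -> R) :
  lipfam f -> lipfam g -> lipfam (fun i x => f i x - g i x).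
Proof.
move=> hf hg.
have hb : forall i (x y : M i), `|(f i x - g i x) - (f i y - g i y)| <=
    (lipnorm (@dist R (M i)) (f i) + lipnorm (@dist R (M i)) (g i)) * dist x y.
  move=> i x y; have := fam_bound x y hf; have := fam_bound x y hg.
  have := ler_normB (f i x - f i y) (g i x - g i y).
  have -> : f i x - f i y - (g i x - g i y) = f i x - g i x - (f i y - g i y) by ring.
  move=> *; lra.
have [f0 [Cf HCf]] := hf; have [g0 [Cg HCg]] := hg.
split.
  move=> i; split; first by exists (lipnorm (@dist R (M i)) (f i) + lipnorm (@dist R (M i)) (g i)).
  by rewrite (proj2 (f0 i)) (proj2 (g0 i)) subrr.
exists (Cf + Cg) => i; apply: le_trans (lipnorm_le _ (hb i)) _.
  by rewrite addr_ge0 // (@fam_ge0 _ _ _ _ i).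
exact: lerD.
Qed.

Lemma part2 (R : realType) (I : Type) (U : set (set I)) (M : I -> pmet R) (f : forall i, M i -> R) (x y : upt M) :
  is_ultrafilter U -> lipfam f -> udist U x y = 0 -> Top U f x = Top U f y.
Proof.
move=> HU hf h0; have := Top_lip x y HU hf; rewrite h0 mulr0 normr_le0 subr_eq0.
by move/eqP.
Qed.

Lemma part3 (R : realType) (I : Type) (U : set (set I)) (M : I -> pmet R) (f g : forall i, M i -> R) :
  is_ultrafilter U -> lipfam f -> lipfam g ->
  ufnorm U (fun i x => f i x - g i x) = 0 -> Top U f = Top U g.
Proof.
move=> HU hf hg h0; apply: funext => x.
have hh := lipfamB hf hg.
have E : Top U (fun i x => f i x - g i x) x = Top U f x - Top U g x.
  exact: ulimE HU (ulimB HU (Top_lim x HU hf) (Top_lim x HU hg)).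
have := Top_lip x (ubase M) HU hh; rewrite h0 mul0r Top_base // subr0 E normr_le0 subr_eq0.
by move/eqP.
Qed.

Lemma part4 (R : realType) (I : Type) (U : set (set I)) (M : I -> pmet R) (f : forall i, M i -> R) :
  is_ultrafilter U -> lipfam f -> Lip0 (udist U (M:=M)) (ubase M) (Top U f).
Proof.
move=> HU hf; split; last exact: Top_base.
by exists (ufnorm U f) => x y; apply: Top_lip.
Qed.

Lemma part5 (R : realType) (I : Type) (U : set (set I)) (M : I -> pmet R) (a : R) (f g : forall i, M i -> R) :
  is_ultrafilter U -> lipfam f -> lipfam g ->
  Top U (fun i x => a * f i x + g i x) = (fun x => a * Top U f x + Top U g x).
Proof.
move=> HU hf hg; apply: funext => x.
exact: ulimE HU (ulimD HU (ulimZ a HU (Top_lim x HU hf)) (Top_lim x HU hg)).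
Qed.

Lemma part6 (R : realType) (I : Type) (U : set (set I)) (M : I -> pmet R) (f : forall i, M i -> R) :
  is_ultrafilter U -> lipfam f -> lipnorm (udist U (M:=M)) (Top U f) <= ufnorm U f.
Proof.
move=> HU hf; apply: lipnorm_le; first exact: ufnorm_ge0.
by move=> x y; apply: Top_lip.
Qed.

Definition mcs (R : realType) (I : Type) (M : I -> pmet R) (g : upt M -> R)
  (s : seq (R * upt M)) i (y : M i) : R :=
  foldr (fun p acc => Num.min (g p.2 + dist y (sval p.2 i)) acc) (dist y (base (M i))) s.

Definition mcf (R : realType) (I : Type) (M : I -> pmet R) (g : upt M -> R)
  (s : seq (R * upt M)) i (y : M i) : R :=
  mcs g s y - mcs g s (base (M i)).

Definition Gf (R : realType) (I : Type) (U : set (set I)) (M : I -> pmet R) (g : upt M -> R)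
  (s : seq (R * upt M)) (y : upt M) : R :=
  foldr (fun p acc => Num.min (g p.2 + udist U y p.2) acc) (udist U y (ubase M)) s.

Lemma mcs_lip (R : realType) (I : Type) (M : I -> pmet R) (g : upt M -> R) s i (y y' : M i) :
  `|mcs g s y - mcs g s y'| <= dist y y'.
Proof.
elim: s => [|p s IH] /=; first exact: dist_diff.
apply: min_lip IH.
have -> : g p.2 + dist y (sval p.2 i) - (g p.2 + dist y' (sval p.2 i)) =
  dist y (sval p.2 i) - dist y' (sval p.2 i) by ring.
exact: dist_diff.
Qed.

Lemma mcf_lipfam (R : realType) (I : Type) (M : I -> pmet R) (g : upt M -> R) s :
  lipfam (mcf g s) /\ forall i, lipnorm (@dist R (M i)) (mcf g s (i:=i)) <= 1.
Proof.
have hb : forall i (y y' : M i), `|mcf g s y - mcf g s y'| <= 1 * dist y y'.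
  move=> i y y'; rewrite mul1r /mcf.
  have -> : mcs g s y - mcs g s (base (M i)) - (mcs g s y' - mcs g s (base (M i))) =
    mcs g s y - mcs g s y' by ring.
  exact: mcs_lip.
have hn : forall i, lipnorm (@dist R (M i)) (mcf g s (i:=i)) <= 1.
  by move=> i; apply: lipnorm_le => //; apply: hb.
split => //; split; last by exists 1.
move=> i; split; first by exists 1; apply: hb.
by rewrite /mcf subrr.
Qed.

Lemma mcs_lim (R : realType) (I : Type) (U : set (set I)) (M : I -> pmet R) (g : upt M -> R) s (y : upt M) :
  is_ultrafilter U -> is_ulim U (fun i => mcs g s (sval y i)) (Gf U g s y).
Proof.
move=> HU; elim: s => [|p s IH] /=; first exact: (udist_lim y (ubase M) HU).
apply: (ulim_min HU) IH.
have hd := udist_lim y (p.2) HU.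
exact: ulimD HU (ulim_cst _ HU) hd.
Qed.

Lemma Gf_ge (R : realType) (I : Type) (U : set (set I)) (M : I -> pmet R) (g : upt M -> R) s (y : upt M) :
  (forall z w, `|g z - g w| <= udist U z w) -> g (ubase M) = 0 -> g y <= Gf U g s y.
Proof.
move=> gl g0; elim: s => [|p s IH] /=.
  by have := gl y (ubase M); rewrite g0 subr0 => h; apply: le_trans (ler_norm _) h.
rewrite le_min IH andbT.
have := gl y p.2; rewrite ler_norml => /andP[_ h]; lra.
Qed.

Lemma Gf_le (R : realType) (I : Type) (U : set (set I)) (M : I -> pmet R) (g : upt M -> R) s (y : upt M) :
  Gf U g s y <= udist U y (ubase M) /\
  forall p, List.In p s -> Gf U g s y <= g p.2 + udist U y p.2.
Proof.
elim: s => [|q s [IH1 IH2]] /=; first by split => // p [].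
split; first by rewrite ge_min IH1 orbT.
move=> p [<-|ps]; first by rewrite ge_min lexx.
by rewrite ge_min IH2 ?orbT.
Qed.

Lemma Top_mcf (R : realType) (I : Type) (U : set (set I)) (M : I -> pmet R) (g : upt M -> R) s :
  is_ultrafilter U ->
  (forall z w, `|g z - g w| <= udist U z w) -> g (ubase M) = 0 ->
  forall p, List.In p s -> Top U (mcf g s) p.2 = g p.2.
Proof.
move=> HU gl g0 p ps.
have Gb : Gf U g s (ubase M) = 0.
  apply/eqP; rewrite eq_le; apply/andP; split.
    by have [h _] := Gf_le U g s (ubase M); rewrite udist_xx in h.
  by rewrite -g0; apply: Gf_ge.
have Gp : Gf U g s p.2 = g p.2.
  apply/eqP; rewrite eq_le; apply/andP; split; last exact: Gf_ge.
  by have [_ h] := Gf_le U g s p.2; have := h p ps; rewrite udist_xx // addr0.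
apply: ulimE => //.
have := ulimB HU (mcs_lim g s p.2 HU) (mcs_lim g s (ubase M) HU).
by rewrite Gb Gp subr0.
Qed.

Lemma ball_lip (R : realType) (I : Type) (U : set (set I)) (M : I -> pmet R) (h : upt M -> R) :
  is_ultrafilter U -> lipball (udist U (M:=M)) (ubase M) h ->
  forall z w, `|h z - h w| <= udist U z w.
Proof.
move=> HU [[lh _] hn] z w.
apply: le_trans (lip_bound (fun x y => udist_ge0 x y HU) lh z w) _.
rewrite -[X in _ <= X]mul1r ler_wpM2r //; exact: udist_ge0.
Qed.

Lemma sum_bound (R : realType) (I : Type) (U : set (set I)) (M : I -> pmet R) (h : upt M -> R) s :
  is_ultrafilter U -> lipball (udist U (M:=M)) (ubase M) h ->
  `|\sum_(p <- s) p.1 * h p.2| <= \sum_(p <- s) `|p.1| * udist U p.2 (ubase M).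
Proof.
move=> HU hb; elim: s => [|p s IH]; first by rewrite !big_nil normr0.
rewrite !big_cons; apply: le_trans (ler_normD _ _) _; apply: lerD => //.
rewrite normrM ler_wpM2l //.
have := ball_lip HU hb p.2 (ubase M); have [[_ ->] _] := hb; by rewrite subr0.
Qed.

Lemma sum_eq (R : realType) (X : Type) (h g : X -> R) (s : seq (R * X)) :
  (forall p, List.In p s -> h p.2 = g p.2) ->
  \sum_(p <- s) p.1 * h p.2 = \sum_(p <- s) p.1 * g p.2.
Proof.
elim: s => [|p s IH] H; first by rewrite !big_nil.
rewrite !big_cons H /=; last by left.
by rewrite IH // => q qs; apply: H; right.
Qed.

Lemma mu_bound (R : realType) (I : Type) (U : set (set I)) (M : I -> pmet R) mu :
  is_ultrafilter U -> in_free (udist U (M:=M)) (ubase M) mu ->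
  exists B, forall h, lipball (udist U (M:=M)) (ubase M) h -> `|mu h| <= B.
Proof.
move=> HU [_ /(_ 1 ltr01) [s Hs]].
exists (1 + \sum_(p <- s) `|p.1| * udist U p.2 (ubase M)) => h hb.
have := Hs h hb; have := sum_bound s HU hb.
have := ler_normB (mu h) (\sum_(p <- s) p.1 * h p.2).
have := ler_normD (mu h - \sum_(p <- s) p.1 * h p.2) (\sum_(p <- s) p.1 * h p.2).
rewrite subrK; move=> *; lra.
Qed.

Lemma part7 (R : realType) (I : Type) (U : set (set I)) (M : I -> pmet R) mu :
  is_ultrafilter U -> in_free (udist U (M:=M)) (ubase M) mu ->
      dualnorm (udist U (M:=M)) (ubase M) mu <=
      sup [set `|mu h| | h in
             [set Top U f | f in [set f : forall i, M i -> R | lipfam f /\ ufnorm U f <= 1]]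
             `&` lipball (udist U (M:=M)) (ubase M)].
Proof.
move=> HU hmu; have [B HB] := mu_bound HU hmu.
set S := (X in _ <= sup X).
have Smk : forall g, lipball (udist U (M:=M)) (ubase M) g -> forall s,
    lipball (udist U (M:=M)) (ubase M) (Top U (mcf g s)) /\ S `|mu (Top U (mcf g s))|.
  move=> g hg s; have [hf hn] := mcf_lipfam g s.
  have uf1 : ufnorm U (mcf g s) <= 1.
    exact: ulim_le HU (ufnorm_lim HU hf) (ulim_cst 1 HU) hn.
  have hball : lipball (udist U (M:=M)) (ubase M) (Top U (mcf g s)).
    split; first exact: part4.
    exact: le_trans (part6 HU hf) uf1.
  split => //; exists (Top U (mcf g s)) => //; split => //; exists (mcf g s) => //.
have zb : lipball (udist U (M:=M)) (ubase M) (fun _ => 0).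
  split; first by split => //; exists 0 => x y; rewrite subrr normr0 mul0r.
  by apply: lipnorm_le => // x y; rewrite subrr normr0 mul1r; apply: udist_ge0.
have hasS : has_sup S.
  split; first by exists `|mu (Top U (mcf (fun _ => 0) [::]))|; exact: (Smk _ zb [::]).2.
  by exists B => v [h [_ hb] <-]; apply: HB.
rewrite /dualnorm; apply: ge_sup; first by exists `|mu (fun _ => 0)|; exists (fun _ => 0).
move=> v [g hg <-].
apply/ler_addgt0Pr => e e0.
have e2 : 0 < e / 2 by rewrite divr_gt0.
have [s Hs] := hmu.2 (e / 2) e2.
have [hball Sh] := Smk g hg s.
have := sup_upper_bound hasS Sh.
have gl := ball_lip HU hg.
have g0 : g (ubase M) = 0 by have [[_ ->] _] := hg.
have := Hs g hg; have := Hs _ hball.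
rewrite (sum_eq (Top_mcf HU gl g0)).
set Sg := \sum_(p <- s) _.
have t1 := ler_normD (mu g - mu (Top U (mcf g s))) (mu (Top U (mcf g s))).
rewrite subrK in t1.
have t2 := ler_normB (mu g - Sg) (mu (Top U (mcf g s)) - Sg).
have E : mu g - Sg - (mu (Top U (mcf g s)) - Sg) = mu g - mu (Top U (mcf g s)) by ring.
rewrite E in t2.
move=> *; lra.
Qed.

Unset Implicit Arguments.
Set Strict Implicit.

Theorem theorem3p1 (R : realType) (I : Type) (U : set (set I)) (M : I -> pmet R) :
  is_ultrafilter U ->
  (forall f : forall i, M i -> R, lipfam f -> forall x : upt M,
      is_ulim U (fun i => f i (sval x i)) (Top U f x)) /\
  (forall f : forall i, M i -> R, lipfam f -> forall x y : upt M,
      udist U x y = 0 -> Top U f x = Top U f y) /\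
  (forall f g : forall i, M i -> R, lipfam f -> lipfam g ->
      ufnorm U (fun i x => f i x - g i x) = 0 -> Top U f = Top U g) /\
  (forall f : forall i, M i -> R, lipfam f -> Lip0 (udist U (M:=M)) (ubase M) (Top U f)) /\
  (forall (a : R) (f g : forall i, M i -> R), lipfam f -> lipfam g ->
      Top U (fun i x => a * f i x + g i x) = (fun x => a * Top U f x + Top U g x)) /\
  (forall f : forall i, M i -> R, lipfam f -> lipnorm (udist U (M:=M)) (Top U f) <= ufnorm U f) /\
  (forall mu, in_free (udist U (M:=M)) (ubase M) mu ->
      dualnorm (udist U (M:=M)) (ubase M) mu <=
      sup [set `|mu h| | h in
             [set Top U f | f in [set f : forall i, M i -> R | lipfam f /\ ufnorm U f <= 1]]
             `&` lipball (udist U (M:=M)) (ubase M)]).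
Proof.
move=> HU; split; first by move=> f hf x; exact: Top_lim.
split; first by move=> f hf x y; exact: part2.
split; first by move=> f g hf hg; exact: part3.
split; first by move=> f hf; exact: part4.
split; first by move=> a f g hf hg; exact: part5.
split; first by move=> f hf; exact: part6.
by move=> mu hmu; exact: part7.
Qed.
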